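(* Let $(\mathcal{X},d)$ be a Polish space and let $c:\mathcal{X}\times\mathcal{X}\to\mathbb{R}^+$ be of the form $c(x,y)=\phi(d(x,y))$, where $\phi:\mathbb{R}^+\to\mathbb{R}^+$ is convex, $\phi(0)=0$, $\phi(x)>0$ for $x>0$, and $\sup_{x>0}\phi(2x)/\phi(x)<\infty$. Define $p_o=\sup_{x>0}x\phi'(x)/\phi(x)$, where $\phi'$ is the right derivative of $\phi$. Then $1\le p_o<\infty$, and $\tilde d(x,y)=c^{1/p_o}(x,y)$ is a distance on $\mathcal{X}$ inducing the same topology as $d$. *)

(* Defs.v *)
From Stdlib Require Import Reals Lra.
From Coquelicot Require Import Coquelicot.
Open Scope R_scope.

Definition is_metric {X : Type} (d : X -> X -> R) : Prop :=
  (forall x y, 0 <= d x y) /\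
  (forall x y, d x y = 0 <-> x = y) /\
  (forall x y, d x y = d y x) /\
  (forall x y z, d x z <= d x y + d y z).

Definition d_cauchy {X : Type} (d : X -> X -> R) (u : nat -> X) : Prop :=
  forall eps, 0 < eps -> exists N, forall m n, (N <= m)%nat -> (N <= n)%nat ->
    d (u m) (u n) < eps.

Definition d_converges {X : Type} (d : X -> X -> R) (u : nat -> X) (l : X) : Prop :=
  forall eps, 0 < eps -> exists N, forall n, (N <= n)%nat -> d (u n) l < eps.

Definition d_complete {X : Type} (d : X -> X -> R) : Prop :=
  forall u, d_cauchy d u -> exists l, d_converges d u l.

Definition d_separable {X : Type} (d : X -> X -> R) : Prop :=
  exists u : nat -> X, forall x eps, 0 < eps -> exists n, d x (u n) < eps.

Definition polish_metric {X : Type} (d : X -> X -> R) : Prop :=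
  is_metric d /\ d_complete d /\ d_separable d.

Definition d_open {X : Type} (d : X -> X -> R) (U : X -> Prop) : Prop :=
  forall x, U x -> exists eps, 0 < eps /\ forall y, d x y < eps -> U y.

Definition same_topology {X : Type} (d1 d2 : X -> X -> R) : Prop :=
  forall U : X -> Prop, d_open d1 U <-> d_open d2 U.

Definition convex_on_nonneg (phi : R -> R) : Prop :=
  forall x y t, 0 <= x -> 0 <= y -> 0 <= t <= 1 ->
    phi (t * x + (1 - t) * y) <= t * phi x + (1 - t) * phi y.

Definition is_right_deriv (phi : R -> R) (x D : R) : Prop :=
  filterlim (fun h => (phi (x + h) - phi x) / h) (at_right 0) (locally D).

Definition po_set (phi : R -> R) (r : R) : Prop :=
  exists x D, 0 < x /\ is_right_deriv phi x D /\ r = x * D / phi x.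

(** a^b for a >= 0, with the convention 0^b = 0 (b > 0). *)
Definition rpow (a b : R) : R := if Rlt_dec 0 a then Rpower a b else 0.

(* Main.v *)
Require Import Defs.
From Stdlib Require Import Reals Lra Classical.
From Coquelicot Require Import Coquelicot.
Open Scope R_scope.

Lemma conv3 (phi : R -> R) : convex_on_nonneg phi ->
  forall a b c, 0 <= a -> a < b -> b < c ->
  (phi b - phi a) * (c - b) <= (phi c - phi b) * (b - a).
Proof.
  intros Hc a b c Ha Hab Hbc.
  set (t := (c - b) / (c - a)).
  assert (Ht : 0 <= t <= 1).
  { unfold t; split.
    - apply Rdiv_le_0_compat; lra.
    - apply Rmult_le_reg_r with (c - a); [lra|].
      unfold Rdiv; rewrite Rmult_assoc, Rinv_l by lra; lra. }
  assert (Hb : t * a + (1 - t) * c = b).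
  { unfold t; field; lra. }
  pose proof (Hc a c t Ha ltac:(lra) Ht) as H. rewrite Hb in H.
  assert (E1 : c - b = t * (c - a)) by (unfold t; field; lra).
  assert (E2 : b - a = (1 - t) * (c - a)) by (unfold t; field; lra).
  rewrite E1, E2.
  assert (0 < c - a) by lra.
  nra.
Qed.

Lemma right_deriv_ex (phi : R -> R) : convex_on_nonneg phi ->
  forall x, 0 < x -> exists D, is_right_deriv phi x D /\
    (forall h, 0 < h -> D <= (phi (x + h) - phi x) / h) /\
    phi x - phi 0 <= x * D.
Proof.
  intros Hc x Hx.
  set (sl := fun h => (phi (x + h) - phi x) / h).
  assert (Hmono : forall h1 h2, 0 < h1 -> h1 < h2 -> sl h1 <= sl h2).
  { intros h1 h2 H1 H2. unfold sl.
    pose proof (conv3 phi Hc x (x + h1) (x + h2) ltac:(lra) ltac:(lra) ltac:(lra)) as H.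
    apply Rmult_le_reg_r with (h1 * h2); [nra|].
    unfold Rdiv. replace ((phi (x + h1) - phi x) * / h1 * (h1 * h2)) with
      ((phi (x + h1) - phi x) * h2) by (field; lra).
    replace ((phi (x + h2) - phi x) * / h2 * (h1 * h2)) with
      ((phi (x + h2) - phi x) * h1) by (field; lra).
    replace (x + h2 - (x + h1)) with (h2 - h1) in H by ring.
    replace (x + h1 - x) with h1 in H by ring. nra. }
  assert (Hlow : forall h, 0 < h -> (phi x - phi 0) / x <= sl h).
  { intros h Hh. unfold sl.
    pose proof (conv3 phi Hc 0 x (x + h) ltac:(lra) Hx ltac:(lra)) as H.
    apply Rmult_le_reg_r with (x * h); [nra|].
    unfold Rdiv. replace ((phi x - phi 0) * / x * (x * h)) with
      ((phi x - phi 0) * h) by (field; lra).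
    replace ((phi (x + h) - phi x) * / h * (x * h)) with
      ((phi (x + h) - phi x) * x) by (field; lra).
    replace (x + h - x) with h in H by ring. nra. }
  set (E := fun r => exists h, 0 < h /\ r = - sl h).
  assert (Hb : bound E).
  { exists (- ((phi x - phi 0) / x)). intros r [h [Hh ->]]. specialize (Hlow h Hh). lra. }
  assert (Hne : exists r, E r) by (exists (- sl 1); exists 1; split; [lra|reflexivity]).
  destruct (completeness E Hb Hne) as [L [HL1 HL2]].
  exists (- L).
  assert (HD : forall h, 0 < h -> - L <= sl h).
  { intros h Hh. assert (E (- sl h)) by (exists h; split; [lra|reflexivity]).
    specialize (HL1 _ H). lra. }
  split; [|split].
  - unfold is_right_deriv. apply filterlim_locally. intros eps.
    assert (Hh0 : exists h0, 0 < h0 /\ sl h0 < - L + eps).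
    { destruct (Classical_Prop.classic (exists h0, 0 < h0 /\ sl h0 < - L + eps)) as [H|H]; [exact H|].
      exfalso. assert (is_upper_bound E (L - eps)).
      { intros r [h [Hh ->]]. destruct (Rle_or_lt (- L + eps) (sl h)) as [H'|H']; [lra|].
        exfalso; apply H; exists h; split; assumption. }
      specialize (HL2 _ H0). destruct eps as [e He]; simpl in *; lra. }
    destruct Hh0 as [h0 [Hh0 Hlt]].
    unfold at_right, within, locally. exists (mkposreal h0 Hh0).
    intros y Hy Hy0. simpl in Hy.
    assert (Hyh : y < h0).
    { unfold ball in Hy; simpl in Hy; unfold AbsRing_ball, abs, minus, plus, opp in Hy; simpl in Hy.
      apply Rabs_lt_between in Hy. lra. }
    unfold ball; simpl; unfold AbsRing_ball, abs, minus, plus, opp; simpl.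
    apply Rabs_lt_between.
    pose proof (HD y Hy0). pose proof (Hmono y h0 Hy0 Hyh). fold (sl y).
    destruct eps; simpl in *; lra.
  - exact HD.
  - assert (forall h, 0 < h -> (phi x - phi 0) / x <= - L).
    + intros.
      destruct (Rle_or_lt ((phi x - phi 0) / x) (- L)) as [H'|H']; [exact H'|].
      assert (is_upper_bound E (- ((phi x - phi 0) / x))).
      { intros r [h' [Hh' ->]]. specialize (Hlow h' Hh'). lra. }
      specialize (HL2 _ H0). lra.
    + specialize (H 1 Rlt_0_1).
      apply Rmult_le_compat_l with (r := x) in H; [|lra].
      replace (x * ((phi x - phi 0) / x)) with (phi x - phi 0) in H by (field; lra). exact H.
Qed.

Lemma slope_mono (phi : R -> R) x : convex_on_nonneg phi -> 0 < x ->
  forall h1 h2, 0 < h1 -> h1 < h2 ->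
  (phi (x + h1) - phi x) / h1 <= (phi (x + h2) - phi x) / h2.
Proof.
  intros Hc Hx h1 h2 H1 H2.
    pose proof (conv3 phi Hc x (x + h1) (x + h2) ltac:(lra) ltac:(lra) ltac:(lra)) as H.
    apply Rmult_le_reg_r with (h1 * h2); [nra|].
    unfold Rdiv. replace ((phi (x + h1) - phi x) * / h1 * (h1 * h2)) with
      ((phi (x + h1) - phi x) * h2) by (field; lra).
    replace ((phi (x + h2) - phi x) * / h2 * (h1 * h2)) with
      ((phi (x + h2) - phi x) * h1) by (field; lra).
    replace (x + h2 - (x + h1)) with (h2 - h1) in H by ring.
    replace (x + h1 - x) with h1 in H by ring. nra.
Qed.

Lemma slope_low (phi : R -> R) x : convex_on_nonneg phi -> 0 < x ->
  forall h, 0 < h -> (phi x - phi 0) / x <= (phi (x + h) - phi x) / h.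
Proof.
  intros Hc Hx h Hh.
    pose proof (conv3 phi Hc 0 x (x + h) ltac:(lra) Hx ltac:(lra)) as H.
    apply Rmult_le_reg_r with (x * h); [nra|].
    unfold Rdiv. replace ((phi x - phi 0) * / x * (x * h)) with
      ((phi x - phi 0) * h) by (field; lra).
    replace ((phi (x + h) - phi x) * / h * (x * h)) with
      ((phi (x + h) - phi x) * x) by (field; lra).
    replace (x + h - x) with h in H by ring. nra.
Qed.

Lemma near_right (phi : R -> R) x D (eps : posreal) : is_right_deriv phi x D ->
  exists del, 0 < del /\ forall h, 0 < h -> h < del ->
    D - eps < (phi (x + h) - phi x) / h < D + eps.
Proof.
  intros HD.
  pose proof (proj1 (filterlim_locally (F := at_right 0) _ D) HD eps) as H.
  destruct H as [[del Hdel] Hd]. exists del; split; [exact Hdel|].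
  intros h Hh Hhd.
  assert (Hb : ball 0 del h).
  { unfold ball; simpl; unfold AbsRing_ball, abs, minus, plus, opp; simpl.
    rewrite Ropp_0, Rplus_0_r, Rabs_pos_eq; lra. }
  specialize (Hd h Hb Hh).
  unfold ball in Hd; simpl in Hd; unfold AbsRing_ball, abs, minus, plus, opp in Hd; simpl in Hd.
  apply Rabs_lt_between in Hd. lra.
Qed.

Lemma rd_bounds (phi : R -> R) x D : convex_on_nonneg phi -> 0 < x -> is_right_deriv phi x D ->
  (forall h, 0 < h -> D <= (phi (x + h) - phi x) / h) /\ phi x - phi 0 <= x * D.
Proof.
  intros Hc Hx HD. split.
  - intros h Hh. destruct (Rle_or_lt D ((phi (x + h) - phi x) / h)) as [H|H]; [exact H|exfalso].
    assert (He : 0 < D - (phi (x + h) - phi x) / h) by lra.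
    destruct (near_right phi x D (mkposreal _ He) HD) as [del [Hdel Hn]]. simpl in Hn.
    set (h' := Rmin h del / 2).
    assert (0 < h') by (unfold h'; assert (0 < Rmin h del) by (apply Rmin_glb_lt; lra); lra).
    assert (h' < h) by (unfold h'; pose proof (Rmin_l h del); lra).
    assert (h' < del) by (unfold h'; pose proof (Rmin_r h del); lra).
    specialize (Hn h' H0 H2). pose proof (slope_mono phi x Hc Hx h' h H0 H1). lra.
  - pose proof (slope_low phi x Hc Hx) as Hl.
    assert ((phi x - phi 0) / x <= D).
    { destruct (Rle_or_lt ((phi x - phi 0) / x) D) as [H|H]; [exact H|exfalso].
      assert (He : 0 < (phi x - phi 0) / x - D) by lra.
      destruct (near_right phi x D (mkposreal _ He) HD) as [del [Hdel Hn]]. simpl in Hn.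
      specialize (Hn (del / 2) ltac:(lra) ltac:(lra)). specialize (Hl (del/2) ltac:(lra)). lra. }
    apply Rmult_le_compat_l with (r := x) in H; [|lra].
    replace (x * ((phi x - phi 0) / x)) with (phi x - phi 0) in H by (field; lra). exact H.
Qed.


Lemma ln_ge_frac s h : 0 < s -> 0 < h -> h / (s + h) <= ln (s + h) - ln s.
Proof.
  intros Hs Hh.
  pose proof (exp_ineq1_le (ln (s / (s + h)))) as H.
  rewrite exp_ln in H by (apply Rdiv_lt_0_compat; lra).
  rewrite ln_div in H by lra.
  assert (s / (s + h) = 1 - h / (s + h)) by (field; lra). lra.
Qed.

Lemma step_lemma (phi : R -> R) (po q s D : R) :
  0 < s -> 0 < phi s -> 1 <= po -> po < q -> is_right_deriv phi s D -> s * D <= po * phi s ->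
  exists h1, 0 < h1 /\ forall h, 0 < h -> h < h1 ->
    phi (s + h) <= phi s * exp (q * (ln (s + h) - ln s)).
Proof.
  intros Hs Hps Hpo Hq HD HsD.
  set (m := (po + q) / 2).
  assert (He : 0 < (q - po) * phi s / (2 * s)).
  { apply Rdiv_lt_0_compat; [apply Rmult_lt_0_compat|]; lra. }
  unfold is_right_deriv in HD. pose proof (proj1 (filterlim_locally (F := at_right 0) _ D) HD) as HD0; clear HD; rename HD0 into HD.
  specialize (HD (mkposreal _ He)).
  destruct HD as [[del Hdel] Hd]. simpl in Hd.
  assert (Hm : 0 < m) by (unfold m; lra).
  assert (Hk : 0 < (q - m) * s / m).
  { apply Rdiv_lt_0_compat; [apply Rmult_lt_0_compat|]; unfold m in *; lra. }
  exists (Rmin del ((q - m) * s / m)). split.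
  { apply Rmin_glb_lt; assumption. }
  intros h Hh Hh1.
  assert (Hhd : h < del) by (eapply Rlt_le_trans; [exact Hh1| apply Rmin_l]).
  assert (Hhk : h < (q - m) * s / m) by (eapply Rlt_le_trans; [exact Hh1| apply Rmin_r]).
  assert (Hb : ball 0 del h).
  { unfold ball; simpl; unfold AbsRing_ball, abs, minus, plus, opp; simpl.
    rewrite Ropp_0, Rplus_0_r, Rabs_pos_eq; lra. }
  specialize (Hd h Hb Hh).
  unfold ball in Hd; simpl in Hd; unfold AbsRing_ball, abs, minus, plus, opp in Hd; simpl in Hd.
  apply Rabs_lt_between in Hd. destruct Hd as [_ Hd].
  assert (Hsl : phi (s + h) - phi s <= h * (D + (q - po) * phi s / (2 * s))).
  { assert (Hsl' : (phi (s + h) - phi s) / h < D + (q - po) * phi s / (2 * s)) by lra.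
    apply Rmult_lt_compat_l with (r := h) in Hsl'; [|lra].
    replace (h * ((phi (s + h) - phi s) / h)) with (phi (s + h) - phi s) in Hsl' by (field; lra).
    lra. }
  assert (HDb : D + (q - po) * phi s / (2 * s) <= m * phi s / s).
  { assert (D <= po * phi s / s).
    { apply Rmult_le_reg_l with s; [lra|]. replace (s * (po * phi s / s)) with (po * phi s) by (field; lra). lra. }
    assert ((q - po) * phi s / (2 * s) = (q - po) / 2 * phi s / s) by (field; lra).
    assert (m * phi s / s = po * phi s / s + (q - po) / 2 * phi s / s) by (unfold m; field; lra).
    lra. }
  assert (Hmq : m * phi s / s <= q * phi s / (s + h)).
  { apply Rmult_le_reg_r with (s * (s + h)); [nra|].
    replace (m * phi s / s * (s * (s + h))) with (m * (s + h) * phi s) by (field; lra).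
    replace (q * phi s / (s + h) * (s * (s + h))) with (q * s * phi s) by (field; lra).
    apply Rmult_le_compat_r; [lra|].
    apply Rmult_lt_compat_l with (r := m) in Hhk; [|lra].
    replace (m * ((q - m) * s / m)) with ((q - m) * s) in Hhk by (field; lra). lra. }
  pose proof (ln_ge_frac s h Hs Hh) as Hl.
  pose proof (exp_ineq1_le (q * (ln (s + h) - ln s))) as Hx.
  assert (Hq0 : 0 < q) by lra.
  assert (q * (h / (s + h)) <= q * (ln (s + h) - ln s)) by (apply Rmult_le_compat_l; lra).
  assert (h * (q * phi s / (s + h)) = phi s * (q * (h / (s + h)))) by (field; lra).
  assert (phi (s + h) <= phi s * (1 + q * (h / (s + h)))).
  { assert (h * (D + (q - po) * phi s / (2 * s)) <= h * (q * phi s / (s + h))).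
    { apply Rmult_le_compat_l; lra. }
    lra. }
  assert (phi s * (1 + q * (h / (s + h))) <= phi s * exp (q * (ln (s + h) - ln s))).
  { apply Rmult_le_compat_l; lra. }
  lra.
Qed.
Lemma mono_q (phi : R -> R) (po q : R) :
  convex_on_nonneg phi -> (forall x, 0 < x -> 0 < phi x) ->
  (forall s, 0 < s -> exists D, is_right_deriv phi s D /\ s * D <= po * phi s) ->
  1 <= po -> po < q ->
  forall x y, 0 < x -> x <= y ->
  phi y * exp (q * ln x) <= phi x * exp (q * ln y).
Proof.
  intros Hc Hpos Hder Hpo Hq x y Hx Hxy.
  set (ex := exp (q * ln x)).
  assert (Hex : 0 < ex) by apply exp_pos.
  set (S := fun t => x <= t <= y /\ phi t * ex <= phi x * exp (q * ln t)).
  assert (HSx : S x) by (split; [lra| apply Rle_refl]).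
  assert (Hbd : bound S) by (exists y; intros t [[_ Ht] _]; exact Ht).
  destruct (completeness S Hbd (ex_intro _ x HSx)) as [s [Hs1 Hs2]].
  assert (Hxs : x <= s) by (apply Hs1; exact HSx).
  assert (Hsy : s <= y) by (apply Hs2; intros t [[_ Ht] _]; exact Ht).
  assert (Hmon : forall t, x <= t -> t <= s -> exp (q * ln t) <= exp (q * ln s)).
  { intros t H1 H2. destruct (Req_dec t s) as [->|Hne]; [lra|].
    left. apply exp_increasing. apply Rmult_lt_compat_l; [lra|]. apply ln_increasing; lra. }
  assert (C1 : phi s * ex <= phi x * exp (q * ln s)).
  { destruct (Rle_or_lt (phi s * ex) (phi x * exp (q * ln s))) as [H|H]; [exact H|exfalso].
    set (g := phi s * ex - phi x * exp (q * ln s)).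
    set (b := y + 1).
    set (M := (phi b - phi s) * ex).
    set (del := g * (b - s) / (Rabs M + 1)).
    assert (Hdel : 0 < del).
    { unfold del, g; apply Rdiv_lt_0_compat; [apply Rmult_lt_0_compat|]; unfold b;
      try lra. pose proof (Rabs_pos M); lra. }
    assert (Ht : exists t, S t /\ s - del < t).
    { destruct (Classical_Prop.classic (exists t, S t /\ s - del < t)) as [H'|H']; [exact H'|].
      exfalso. assert (is_upper_bound S (s - del)).
      { intros t Ht. destruct (Rle_or_lt t (s - del)) as [H1|H1]; [exact H1|].
        exfalso; apply H'; exists t; split; assumption. }
      specialize (Hs2 _ H0). lra. }
    destruct Ht as [t [[[Hxt Hty] Ht] Hst]].
    assert (Hts : t <= s) by (apply Hs1; split; [lra|exact Ht]).
    destruct (Req_dec t s) as [->|Hne]; [lra|].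
    pose proof (conv3 phi Hc t s b ltac:(lra) ltac:(lra) ltac:(unfold b; lra)) as Hcv.
    pose proof (Hmon t Hxt Hts) as Hm.
    assert (Hpt : phi t * ex <= phi x * exp (q * ln s)).
    { eapply Rle_trans; [exact Ht|]. apply Rmult_le_compat_l; [left; apply Hpos; lra| exact Hm]. }
    assert (Hk : (phi s * ex - phi t * ex) * (b - s) <= M * (s - t)).
    { unfold M. apply Rmult_le_compat_r with (r := ex) in Hcv; [|lra]. nra. }
    assert (g * (b - s) <= M * (s - t)).
    { unfold g. apply Rle_trans with ((phi s * ex - phi t * ex) * (b - s)); [|exact Hk].
      apply Rmult_le_compat_r; unfold b; lra. }
    assert (M * (s - t) <= Rabs M * (s - t)) by (apply Rmult_le_compat_r; [lra| apply Rle_abs]).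
    assert (Rabs M * (s - t) < (Rabs M + 1) * del).
    { pose proof (Rabs_pos M). nra. }
    assert ((Rabs M + 1) * del = g * (b - s)).
    { unfold del. field. pose proof (Rabs_pos M); lra. }
    lra. }
  assert (Hss : s = y).
  { destruct (Req_dec s y) as [H|H]; [exact H|exfalso].
    assert (Hs0 : 0 < s) by lra.
    destruct (Hder s Hs0) as [D [HD HsD]].
    destruct (step_lemma phi po q s D Hs0 (Hpos s Hs0) Hpo Hq HD HsD) as [h1 [Hh1 Hst]].
    set (h := Rmin (h1 / 2) (y - s)).
    assert (Hh : 0 < h) by (apply Rmin_glb_lt; lra).
    assert (Hhy : h <= y - s) by apply Rmin_r.
    assert (Hhh : h < h1) by (eapply Rle_lt_trans; [apply Rmin_l| lra]).
    specialize (Hst h Hh Hhh).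
    assert (S (s + h)).
    { split; [lra|].
      apply Rmult_le_compat_r with (r := ex) in Hst; [|lra].
      eapply Rle_trans; [exact Hst|].
      replace (phi s * exp (q * (ln (s + h) - ln s)) * ex) with
        (phi s * ex * exp (q * (ln (s + h) - ln s))) by ring.
      replace (exp (q * ln (s + h))) with (exp (q * ln s) * exp (q * (ln (s + h) - ln s)))
        by (rewrite <- exp_plus; f_equal; ring).
      rewrite <- Rmult_assoc. apply Rmult_le_compat_r; [left; apply exp_pos| exact C1]. }
    specialize (Hs1 _ H0). lra. }
  subst s. exact C1.
Qed.

Lemma mono_log (phi : R -> R) (po : R) :
  convex_on_nonneg phi -> (forall x, 0 < x -> 0 < phi x) ->
  (forall s, 0 < s -> exists D, is_right_deriv phi s D /\ s * D <= po * phi s) ->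
  1 <= po ->
  forall x y, 0 < x -> x <= y ->
  ln (phi y) - po * ln y <= ln (phi x) - po * ln x.
Proof.
  intros Hc Hpos Hder Hpo x y Hx Hxy.
  assert (Hq : forall q, po < q -> ln (phi y) - ln (phi x) <= q * (ln y - ln x)).
  { intros q Hq. pose proof (mono_q phi po q Hc Hpos Hder Hpo Hq x y Hx Hxy) as H.
    apply ln_le in H; [|apply Rmult_lt_0_compat; [apply Hpos; lra| apply exp_pos]].
    rewrite !ln_mult, !ln_exp in H by (try apply Hpos; try apply exp_pos; lra). lra. }
  set (A := ln (phi y) - ln (phi x)). set (L := ln y - ln x).
  assert (HL : 0 <= L).
  { unfold L. destruct (Req_dec x y) as [->|Hne]; [lra|].
    pose proof (ln_increasing x y Hx ltac:(lra)); lra. }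
  destruct (Rle_or_lt A (po * L)) as [H|H]; [unfold A, L in H; lra|exfalso].
  destruct (Req_dec L 0) as [HL0|HL0].
  { specialize (Hq (po + 1) ltac:(lra)). fold A L in Hq. rewrite HL0 in *. lra. }
  specialize (Hq (po + (A - po * L) / (2 * L))).
  assert (0 < (A - po * L) / (2 * L)) by (apply Rdiv_lt_0_compat; lra).
  specialize (Hq ltac:(lra)). fold A L in Hq.
  assert ((po + (A - po * L) / (2 * L)) * L = po * L + (A - po * L) / 2) by (field; lra).
  lra.
Qed.

Lemma phi_lt (phi : R -> R) : convex_on_nonneg phi -> phi 0 = 0 ->
  (forall x, 0 < x -> 0 < phi x) -> forall a b, 0 <= a -> a < b -> phi a < phi b.
Proof.
  intros Hc H0 Hpos a b Ha Hab.
  destruct (Req_dec a 0) as [->|Hne].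
  - rewrite H0; apply Hpos; lra.
  - pose proof (conv3 phi Hc 0 a b ltac:(lra) ltac:(lra) Hab) as H.
    rewrite H0 in H. pose proof (Hpos a ltac:(lra)). nra.
Qed.

Lemma rpow_pos_eq a b : 0 < a -> rpow a b = exp (b * ln a).
Proof. intros H; unfold rpow; destruct (Rlt_dec 0 a); [reflexivity| lra]. Qed.

Lemma rpow_nonpos a b : ~ 0 < a -> rpow a b = 0.
Proof. intros H; unfold rpow; destruct (Rlt_dec 0 a); [contradiction| reflexivity]. Qed.

Theorem lemma2p1 (X : Type) (d : X -> X -> R) (phi : R -> R)
  (Hd : polish_metric d)
  (Hphi_nonneg : forall x, 0 <= x -> 0 <= phi x)
  (Hconv : convex_on_nonneg phi)
  (Hphi0 : phi 0 = 0)
  (Hpos : forall x, 0 < x -> 0 < phi x)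
  (Hdoubling : exists K, forall x, 0 < x -> phi (2 * x) / phi x <= K) :
  (forall x, 0 < x -> exists D, is_right_deriv phi x D) /\
  exists po : R,
    is_lub (po_set phi) po /\ 1 <= po /\
    is_metric (fun x y => rpow (phi (d x y)) (1 / po)) /\
    same_topology d (fun x y => rpow (phi (d x y)) (1 / po)).
Proof.
  assert (Hder : forall x, 0 < x -> exists D, is_right_deriv phi x D).
  { intros x Hx. destruct (right_deriv_ex phi Hconv x Hx) as [D [HD _]]. exists D; exact HD. }
  split; [exact Hder|].
  destruct Hdoubling as [K HK].
  assert (Hbd : forall r, po_set phi r -> 1 <= r <= K - 1).
  { intros r [x [D [Hx [HD ->]]]].
    destruct (rd_bounds phi x D Hconv Hx HD) as [H1 H2].
    specialize (H1 x Hx). pose proof (Hpos x Hx) as Hp.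
    pose proof (HK x Hx) as Hk.
    replace (x + x) with (2 * x) in H1 by ring.
    assert (phi (2 * x) <= K * phi x).
    { apply Rmult_le_compat_r with (r := phi x) in Hk; [|lra].
      replace (phi (2 * x) / phi x * phi x) with (phi (2 * x)) in Hk by (field; lra). exact Hk. }
    assert (x * D <= phi (2 * x) - phi x).
    { apply Rmult_le_compat_l with (r := x) in H1; [|lra].
      replace (x * ((phi (2 * x) - phi x) / x)) with (phi (2 * x) - phi x) in H1 by (field; lra).
      exact H1. }
    rewrite Hphi0 in H2.
    split.
    - apply Rmult_le_reg_r with (phi x); [exact Hp|].
      replace (x * D / phi x * phi x) with (x * D) by (field; lra). lra.
    - apply Rmult_le_reg_r with (phi x); [exact Hp|].
      replace (x * D / phi x * phi x) with (x * D) by (field; lra). lra. }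
  assert (Hne : exists r, po_set phi r).
  { destruct (Hder 1 Rlt_0_1) as [D HD]. exists (1 * D / phi 1). exists 1, D. split; [lra| split; [exact HD| reflexivity]]. }
  assert (Hb : bound (po_set phi)) by (exists (K - 1); intros r Hr; apply Hbd; exact Hr).
  destruct (completeness _ Hb Hne) as [po Hpo].
  exists po. split; [exact Hpo|].
  assert (Hpo1 : 1 <= po).
  { destruct Hne as [r Hr]. pose proof (Hbd r Hr). pose proof (proj1 Hpo r Hr). lra. }
  split; [exact Hpo1|].
  assert (Hder2 : forall s, 0 < s -> exists D, is_right_deriv phi s D /\ s * D <= po * phi s).
  { intros s Hs. destruct (Hder s Hs) as [D HD]. exists D. split; [exact HD|].
    assert (po_set phi (s * D / phi s)) by (exists s, D; split; [exact Hs| split; [exact HD| reflexivity]]).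
    pose proof (proj1 Hpo _ H). pose proof (Hpos s Hs).
    apply Rmult_le_compat_r with (r := phi s) in H0; [|lra].
    replace (s * D / phi s * phi s) with (s * D) in H0 by (field; lra). exact H0. }
  pose proof (mono_log phi po Hconv Hpos Hder2 Hpo1) as Hml.
  set (psi := fun t => rpow (phi t) (1 / po)).
  assert (Hpsi0 : psi 0 = 0) by (unfold psi; apply rpow_nonpos; rewrite Hphi0; lra).
  assert (Hpsip : forall t, 0 < t -> psi t = exp (1 / po * ln (phi t))).
  { intros t Ht; unfold psi; apply rpow_pos_eq; apply Hpos; exact Ht. }
  assert (Hpsinn : forall t, 0 <= t -> 0 <= psi t).
  { intros t Ht. destruct (Req_dec t 0) as [->|Hn]; [lra|]. rewrite Hpsip by lra. left; apply exp_pos. }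
  assert (Hpsilt : forall a b, 0 <= a -> a < b -> psi a < psi b).
  { intros a b Ha Hab. rewrite (Hpsip b) by lra.
    destruct (Req_dec a 0) as [->|Hn]; [rewrite Hpsi0; apply exp_pos|].
    rewrite Hpsip by lra. apply exp_increasing. apply Rmult_lt_compat_l.
    - apply Rdiv_lt_0_compat; lra.
    - apply ln_increasing; [apply Hpos; lra| apply phi_lt; auto]. }
  assert (Hpsile : forall a b, 0 <= a -> a <= b -> psi a <= psi b).
  { intros a b Ha Hab. destruct (Req_dec a b) as [->|Hn]; [lra|]. left; apply Hpsilt; lra. }
  assert (Hratio : forall x y, 0 < x -> x <= y -> psi y * x <= psi x * y).
  { intros x y Hx Hxy. specialize (Hml x y Hx Hxy).
    set (L1 := 1 / po * ln (phi y) - ln y). set (L2 := 1 / po * ln (phi x) - ln x).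
    assert (HL : L1 <= L2).
    { unfold L1, L2. apply Rmult_le_compat_l with (r := 1 / po) in Hml; [|apply Rlt_le, Rdiv_lt_0_compat; lra].
      assert (1 / po * (ln (phi y) - po * ln y) = 1 / po * ln (phi y) - ln y) by (field; lra).
      assert (1 / po * (ln (phi x) - po * ln x) = 1 / po * ln (phi x) - ln x) by (field; lra).
      lra. }
    assert (E1 : psi y = exp L1 * y).
    { rewrite Hpsip by lra. rewrite <- (exp_ln y) at 2 by lra. rewrite <- exp_plus. f_equal. unfold L1; ring. }
    assert (E2 : psi x = exp L2 * x).
    { rewrite Hpsip by lra. rewrite <- (exp_ln x) at 2 by lra. rewrite <- exp_plus. f_equal. unfold L2; ring. }
    rewrite E1, E2.
    assert (exp L1 <= exp L2).
    { destruct (Req_dec L1 L2) as [->|Hn]; [lra|]. left; apply exp_increasing; lra. }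
    replace (exp L1 * y * x) with (exp L1 * (x * y)) by ring.
    replace (exp L2 * x * y) with (exp L2 * (x * y)) by ring.
    apply Rmult_le_compat_r; [nra| exact H]. }
  assert (Hsub : forall a b, 0 < a -> 0 < b -> psi (a + b) <= psi a + psi b).
  { intros a b Ha Hb'.
    pose proof (Hratio a (a + b) Ha ltac:(lra)) as H1.
    pose proof (Hratio b (a + b) Hb' ltac:(lra)) as H2.
    assert (Hs : 0 < a + b) by lra.
    apply Rmult_le_reg_r with (a + b); [lra|].
    assert (psi (a + b) * (a + b) = psi (a + b) * a + psi (a + b) * b) by ring.
    assert (psi a * (a + b) + psi b * (a + b) = (psi a + psi b) * (a + b)) by ring.
    nra. }
  destruct Hd as [[Hd0 [Hdeq [Hdsym Hdtri]]] _].
  assert (Hcont : forall E, 0 < E -> exists del, 0 < del /\ forall t, 0 <= t -> t < del -> psi t < E).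
  { intros E HE.
    set (T := exp (po * ln E)).
    assert (HT : 0 < T) by apply exp_pos.
    assert (Hp1 : 0 < phi 1) by (apply Hpos; lra).
    exists (Rmin 1 (T / (phi 1 + 1))). split.
    { apply Rmin_glb_lt; [lra| apply Rdiv_lt_0_compat; lra]. }
    intros t Ht Htd.
    destruct (Req_dec t 0) as [->|Hn]; [rewrite Hpsi0; exact HE|].
    assert (Ht1 : t <= 1) by (pose proof (Rmin_l 1 (T / (phi 1 + 1))); lra).
    assert (HtT : t < T / (phi 1 + 1)) by (pose proof (Rmin_r 1 (T / (phi 1 + 1))); lra).
    assert (Hph : phi t <= t * phi 1).
    { pose proof (Hconv 1 0 t ltac:(lra) ltac:(lra) ltac:(lra)) as H.
      replace (t * 1 + (1 - t) * 0) with t in H by ring. rewrite Hphi0 in H. lra. }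
    assert (phi t < T).
    { apply Rmult_lt_compat_r with (r := phi 1 + 1) in HtT; [|lra].
      replace (T / (phi 1 + 1) * (phi 1 + 1)) with T in HtT by (field; lra). nra. }
    rewrite Hpsip by lra.
    rewrite <- (exp_ln E) by lra. apply exp_increasing.
    assert (ln (phi t) < po * ln E).
    { replace (po * ln E) with (ln T) by (unfold T; rewrite ln_exp; reflexivity).
      apply ln_increasing; [apply Hpos; lra| exact H]. }
    apply Rmult_lt_reg_l with po; [lra|].
    replace (po * (1 / po * ln (phi t))) with (ln (phi t)) by (field; lra). exact H0. }
  split.
  - split; [|split; [|split]].
    + intros x y. apply Hpsinn, Hd0.
    + intros x y. split.
      * intros H. apply Hdeq. destruct (Req_dec (d x y) 0) as [H0|H0]; [exact H0|].
        exfalso. pose proof (Hpsilt 0 (d x y) ltac:(lra) ltac:(pose proof (Hd0 x y); lra)) as Hl.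
        change (psi (d x y) = 0) in H. rewrite Hpsi0 in Hl. lra.
      * intros ->. change (psi (d y y) = 0). rewrite (proj2 (Hdeq y y) eq_refl). exact Hpsi0.
    + intros x y. rewrite Hdsym. reflexivity.
    + intros x y z. change (psi (d x z) <= psi (d x y) + psi (d y z)).
      destruct (Req_dec (d x y) 0) as [H1|H1].
      { apply Hdeq in H1. subst y. rewrite (proj2 (Hdeq x x) eq_refl), Hpsi0. lra. }
      destruct (Req_dec (d y z) 0) as [H2|H2].
      { apply Hdeq in H2. subst z. rewrite (proj2 (Hdeq y y) eq_refl), Hpsi0. lra. }
      pose proof (Hd0 x y). pose proof (Hd0 y z).
      eapply Rle_trans; [apply Hpsile; [apply Hd0| apply Hdtri]|].
      apply Hsub; lra.
  - intros U. split.
    + intros HU x Hx. destruct (HU x Hx) as [eps [He HUe]].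
      exists (psi eps). split; [rewrite Hpsip by lra; apply exp_pos|].
      intros y Hy. apply HUe. change (psi (d x y) < psi eps) in Hy.
      destruct (Rlt_or_le (d x y) eps) as [H|H]; [exact H|].
      exfalso. pose proof (Hpsile eps (d x y) ltac:(lra) H). lra.
    + intros HU x Hx. destruct (HU x Hx) as [eps [He HUe]].
      destruct (Hcont eps He) as [del [Hdel Hc]].
      exists del. split; [exact Hdel|].
      intros y Hy. apply HUe. apply Hc; [apply Hd0| exact Hy].
Qed.
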